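(* Let $H(s)$ be an SSS system of order $n$, and let $H_r(s)$ be a strictly proper ZIP system of order $r<n$ such that $H-H_r$ vanishes at $2r$ points $s_1,\dots,s_{2r}\in(0,\infty)$, counted with multiplicity (i.e. $H_r$ interpolates $H$ at these points, not necessarily distinct). Then all remaining zeros of the error system $H(s)-H_r(s)$ lie in $(-\infty,0)$.
   Context: A system $H(s)=\boldsymbol c^T(s\boldsymbol I-\boldsymbol A)^{-1}\boldsymbol b$ is state-space-symmetric (SSS) if $\boldsymbol A=\boldsymbol A^T$ and $\boldsymbol c=\boldsymbol b$; systems are assumed asymptotically stable. A system $H(s)=K\frac{\prod_{i=1}^{m-1}(s-z_i)}{\prod_{j=1}^m(s-\lambda_j)}$ is a strictly proper zero-interlacing-pole (ZIP) system if $0>\lambda_1>z_1>\lambda_2>z_2>\cdots>z_{m-1}>\lambda_m$; equivalently $H(s)=\sum_{i=1}^m\frac{b_i}{s-\lambda_i}$ with distinct $\lambda_i<0$ and all $b_i>0$. *)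

(* Defs.v *)
(* Scalars: C : numClosedFieldType (e.g. algC), so that
   "zeros" of the error system range over all complex numbers. *)
From HB Require Import structures.
From mathcomp Require Import all_boot all_order all_algebra.
Set Implicit Arguments. Unset Strict Implicit. Unset Printing Implicit Defensive.
Import Order.TTheory GRing.Theory Num.Theory.
Local Open Scope ring_scope.

Section Defs.
Variable C : numClosedFieldType.

(* State-space-symmetric, asymptotically stable, real system of state
   dimension n: A = A^T, c = b, real data, all eigenvalues with Re < 0. *)
Definition SSS (n : nat) (A : 'M[C]_n) (b : 'cV[C]_n) : Prop :=
  [/\ A^T = A, A \is a mxOver Num.real, b \is a mxOver Num.real &
      forall z : C, root (char_poly A) z -> 'Re z < 0].

(* "order n": the realization (A,b,b^T) is minimal, i.e. (for an SSS system)
   controllable: the Krylov matrix [b^T; b^T A; ...; b^T A^(n-1)] has full rank. *)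
Definition minimal_SSS (n : nat) (A : 'M[C]_n) (b : 'cV[C]_n) : bool :=
  row_free (\matrix_(i < n) (b^T *m A ^+ i)).

(* H(s) = b^T (sI - A)^{-1} b = numH / char_poly A. *)
Definition numH (n : nat) (A : 'M[C]_n) (b : 'cV[C]_n) : {poly C} :=
  ((map_mx polyC b)^T *m \adj (char_poly_mx A) *m map_mx polyC b) 0 0.

(* Strictly proper ZIP system of order r:
   H_r(s) = sum_i bb_i / (s - lam_i), lam_i < 0 distinct, bb_i > 0. *)
Definition ZIP (r : nat) (lam bb : 'I_r -> C) : Prop :=
  [/\ injective lam, forall i, lam i < 0 & forall i, 0 < bb i].

Definition denHr (r : nat) (lam : 'I_r -> C) : {poly C} :=
  \prod_(i < r) ('X - (lam i)%:P).

Definition numHr (r : nat) (lam bb : 'I_r -> C) : {poly C} :=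
  \sum_(i < r) bb i *: \prod_(j < r | j != i) ('X - (lam j)%:P).

(* Numerator of the error system H - H_r over the common denominator
   char_poly A * denHr lam. *)
Definition err_num (n r : nat) (A : 'M[C]_n) (b : 'cV[C]_n)
    (lam bb : 'I_r -> C) : {poly C} :=
  numH A b * denHr lam - numHr lam bb * char_poly A.

End Defs.

(* Main.v *)
Require Import Defs.
From HB Require Import structures.
From mathcomp Require Import all_boot all_order all_algebra.
From mathcomp Require Import ring zify.
Import Order.TTheory GRing.Theory Num.Theory.
Local Open Scope ring_scope.
Set Implicit Arguments. Unset Strict Implicit. Unset Printing Implicit Defensive.

Section Lists.
Variable C : numClosedFieldType.
Implicit Types l : seq (C * C).

Definition Dl l : {poly C} := \prod_(x <- l) ('X - x.1%:P).
Fixpoint Fl l : {poly C} :=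
  if l is x :: l' then x.2 *: Dl l' + ('X - x.1%:P) * Fl l' else 0.

Lemma Dl_cons x l : Dl (x :: l) = ('X - x.1%:P) * Dl l.
Proof. by rewrite /Dl big_cons. Qed.

Lemma Dl_rem x l : x \in l -> Dl l = ('X - x.1%:P) * Dl (rem x l).
Proof. by move=> xl; rewrite /Dl (big_rem _ xl). Qed.

Lemma Dl_perm l1 l2 : perm_eq l1 l2 -> Dl l1 = Dl l2.
Proof. by move=> h; rewrite /Dl (perm_big _ h). Qed.

Lemma Fl_rem x l : x \in l ->
  Fl l = x.2 *: Dl (rem x l) + ('X - x.1%:P) * Fl (rem x l).
Proof.
elim: l => //= y l IH; rewrite inE.
case: (eqVneq y x) => [->|nyx] /=; first by [].
move=> xl; idtac.
rewrite (IH xl) (Dl_rem xl) Dl_cons -!mul_polyC.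
ring.
Qed.

Lemma Fl_perm l1 l2 : perm_eq l1 l2 -> Fl l1 = Fl l2.
Proof.
elim: l1 l2 => [|x l1 IH] l2 /=.
  by rewrite perm_sym => /perm_nilP ->.
move=> h.
have xl2 : x \in l2 by rewrite -(perm_mem h) mem_head.
have h' : perm_eq l1 (rem x l2).
  by rewrite -(perm_cons x); apply: perm_trans h (perm_to_rem xl2).
by rewrite (Fl_rem xl2) (IH _ h') (Dl_perm h').
Qed.

Lemma Fl_cat l1 l2 : Fl (l1 ++ l2) = Fl l1 * Dl l2 + Dl l1 * Fl l2.
Proof.
elim: l1 => [|x l1 IH] /=; first by rewrite /Dl big_nil mul0r add0r mul1r.
rewrite IH /Dl big_cat /= big_cons -!mul_polyC; ring.
Qed.

Lemma size_Fl l : (size (Fl l) <= size l)%N.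
Proof.
elim: l => [|x l IH] /=; first by rewrite size_poly0.
apply: leq_trans (size_polyD _ _) _; rewrite geq_max; apply/andP; split.
  apply: leq_trans (size_scale_leq _ _) _.
  by rewrite /Dl size_prod_XsubC.
apply: leq_trans (size_polyMleq _ _) _.
by rewrite size_XsubC /=.
Qed.

End Lists.

Section G.
Variable C : numClosedFieldType.
Implicit Types l : seq (C * C).

Definition Gs (I : finType) (p w : I -> C) : {poly C} :=
  \sum_i w i *: \prod_(j | j != i) ('X - (p j)%:P).

Lemma Gs_eval (I : finType) (p w : I -> C) k :
  (forall j, j != k -> p j != p k) ->
  (Gs p w).[p k] = w k * \prod_(j | j != k) (p k - p j).
Proof.
move=> pinj; rewrite /Gs horner_sum (bigD1 k) //= [X in _ + X]big1 ?addr0.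
  by rewrite hornerZ horner_prod; congr (_ * _); apply: eq_bigr => j _; rewrite hornerXsubC.
move=> i nik; rewrite hornerZ horner_prod (bigD1 k) /=; last by rewrite eq_sym.
by rewrite hornerXsubC subrr mul0r mulr0.
Qed.

Lemma Fl_nth l m (e : size l = m) :
  Fl l = Gs (fun i : 'I_m => (nth (0, 0) l i).1) (fun i => (nth (0, 0) l i).2).
Proof.
subst m; elim: l => [|x l IH] /=; first by rewrite /Gs big_ord0.
rewrite /Gs big_ord_recl /=.
congr (_ + _).
  congr (_ *: _); rewrite big_mkcond big_ord_recl /= /Dl (big_nth (0,0)) big_mkord.
  by rewrite mul1r; apply: eq_bigr => j _ /=; rewrite add0n.
rewrite IH /Gs mulr_sumr; apply: eq_bigr => i _.
rewrite add0n [in RHS]big_mkcond big_ord_recl /= -scalerAr; congr (_ *: _).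
rewrite [in LHS]big_mkcond /=; congr (_ * _); apply: eq_bigr => j _.

Qed.

Lemma Fl_enum m (f : 'I_m -> C * C) :
  Fl (map f (enum 'I_m)) = Gs (fun i => (f i).1) (fun i => (f i).2).
Proof.
have e : size (map f (enum 'I_m)) = m by rewrite size_map size_enum_ord.
rewrite (Fl_nth e) /Gs; apply: eq_bigr => i _.
have hi : forall j : 'I_m, nth (0,0) (map f (enum 'I_m)) j = f j.
  by move=> j; rewrite (nth_map j) ?size_enum_ord // nth_ord_enum.
by rewrite hi; congr (_ *: _); apply: eq_bigr => j _; rewrite hi.
Qed.

Lemma Dl_enum m (f : 'I_m -> C * C) :
  Dl (map f (enum 'I_m)) = \prod_i ('X - (f i).1%:P).
Proof. by rewrite /Dl big_map big_enum. Qed.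

End G.

Section IVT.
Variable C : numClosedFieldType.
Local Notation cj := (map_poly (@Num.conj C)).

Lemma ivt_conj (F : {poly C}) (a b : C) : cj F = F ->
  a \is Num.real -> b \is Num.real -> a < b -> F.[a] * F.[b] < 0 ->
  exists z, [/\ a < z, z < b & root F z].
Proof.
move=> + ra rb ab.
have [k ltFk] := ubnP (size F); elim: k F ltFk => // k IH F ltFk cF Fab.
have F0 : F != 0.
  by apply: contraTneq Fab => ->; rewrite horner0 mul0r ltxx.
have Fa0 : F.[a] != 0 by apply: contraTneq Fab => ->; rewrite mul0r ltxx.
have Fb0 : F.[b] != 0 by apply: contraTneq Fab => ->; rewrite mulr0 ltxx.
have reduce : forall q G, F = G * q -> cj q = q -> q \is monic ->
    (1 < size q)%N -> 0 < q.[a] * q.[b] ->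
    exists z, [/\ a < z, z < b & root F z].
  move=> q G FGq cq mq sq qab.
  have G0 : G != 0 by apply: contraNneq F0 => G0; rewrite FGq G0 mul0r.
  have cG : cj G = G.
    apply: (mulIf (monic_neq0 mq)); rewrite -{1}cq -rmorphM /= -FGq.
    by rewrite cF.
  have sG : (size G < k)%N.
    have lt : (size G < size F)%N.
      rewrite FGq size_Mmonic //.
      by case: (size q) sq => // m m1; rewrite addnS /= -{1}(addn0 (size G)) ltn_add2l.
    by apply: leq_trans lt _; rewrite -ltnS.
  have Gab : G.[a] * G.[b] < 0.
    rewrite -(pmulr_llt0 _ qab).
    have -> : G.[a] * G.[b] * (q.[a] * q.[b]) = F.[a] * F.[b].
      by rewrite FGq !hornerM; ring.
    by [].
  have [z [az zb rz]] := IH G sG cG Gab.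
  by exists z; split => //; rewrite FGq rootM rz.
have [s1|s1] := leqP (size F) 1.
  move: Fab cF; rewrite (size1_polyC s1) !hornerC map_polyC /= => Fab /polyC_inj cF.
  by move: (mul_conjC_ge0 F`_0); rewrite cF => h; move: (lt_le_trans Fab h); rewrite ltxx.
have [z rz] : exists z, root F z.
  by apply/closed_rootP; rewrite neq_ltn s1 orbT.
have [zr|zr] := boolP (z \is Num.real).
  have [/andP[az zb]|h] := boolP ((a < z) && (z < b)); first by exists z.
  have za : z != a by apply: contraNneq Fa0 => <-; exact: rz.
  have zb : z != b by apply: contraNneq Fb0 => <-; exact: rz.
  have [G FG] := factor_theorem _ _ rz.
  apply: (reduce _ G FG).
  - by rewrite map_polyXsubC /= (CrealP zr).
  - exact: monicXsubC.
  - by rewrite size_XsubC.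
  rewrite !hornerXsubC.
  move: h; rewrite negb_and -!(real_leNgt) // => /orP[zla|bz].
    have zla' : z < a by rewrite lt_neqAle za zla.
    by rewrite mulr_gt0 // subr_gt0 //; apply: lt_trans ab.
  have bz' : b < z by rewrite lt_neqAle eq_sym zb bz.
  rewrite nmulr_rgt0 ?subr_lt0 //; apply: lt_trans ab bz'.
have zcz : z^* != z by apply: contraNneq zr => /CrealP.
have rzc : root F z^*.
  by rewrite /root -cF horner_map (eqP rz) rmorph0.
have [G1 FG1] := factor_theorem _ _ rz.
have rG1 : root G1 z^*.
  move: rzc; rewrite /root FG1 hornerM hornerXsubC mulf_eq0 subr_eq0 (negPf zcz).
  by rewrite orbF.
have [G G1G] := factor_theorem _ _ rG1.
apply: (reduce (('X - (z^*)%:P) * ('X - z%:P)) G).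
- by rewrite FG1 G1G mulrA.
- by rewrite rmorphM /= !map_polyXsubC /= conjCK mulrC.
- by rewrite monicMl monicXsubC.
- by rewrite size_Mmonic ?monic_neq0 ?monicXsubC // !size_XsubC.
have pos : forall x, x \is Num.real -> 0 < (('X - (z^*)%:P) * ('X - z%:P)).[x].
  move=> x xr; rewrite hornerM !hornerXsubC.
  have -> : x - z^* = (x - z)^* by rewrite rmorphB /= (CrealP xr).
  rewrite mulrC mul_conjC_gt0 subr_eq0.
  by apply: contraNneq zr => <-.
by rewrite mulr_gt0 ?pos.
Qed.

End IVT.

Section Base.
Variable C : numClosedFieldType.
Implicit Types l : seq (C * C).
Local Notation cj := (map_poly (@Num.conj C)).


Lemma Dl_real l : all (fun x => x.1 \is Num.real) l -> cj (Dl l) = Dl l.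
Proof.
move=> al; rewrite /Dl rmorph_prod; apply: eq_big_seq => y yl.
by rewrite /= map_polyXsubC /= (CrealP (allP al y yl)).
Qed.

Lemma Fl_real l : all (fun x => (x.1 \is Num.real) && (x.2 \is Num.real)) l ->
  cj (Fl l) = Fl l.
Proof.
elim: l => [|x l IH] /=; first by rewrite rmorph0.
move=> /andP[/andP[r1 r2] al].
rewrite rmorphD rmorphM /= map_polyZ map_polyXsubC /= IH //.
rewrite Dl_real ?(CrealP r1) ?(CrealP r2) //.
by apply/allP => y /(allP al) /andP[].
Qed.

Lemma count_in_le (T : eqType) (a b : pred T) (s : seq T) :
  {in s, forall x, a x -> b x} -> (count a s <= count b s)%N.
Proof.
elim: s => //= x s IH h.
apply: leq_add; last by apply: IH => y ys; apply: h; rewrite inE ys orbT.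
by case: (a x) (h x (mem_head _ _)) => //= ->.
Qed.

Lemma base l :
  (forall i j, (i < j < size l)%N -> (nth (0 : C, 0 : C) l i).1 < (nth (0 : C, 0 : C) l j).1) ->
  all (fun x => [&& x.1 < 0, x.2 \is Num.real & x.2 != 0]) l ->
  Fl l != 0 ->
  exists T R, [/\ Fl l = T * R, (forall z, root T z -> z < 0) &
    (size R <= 2 * count (fun x : C * C => (x.2 < 0)%R) l + 1)%N].
Proof.
move=> hp hl F0.
set m := size l.
pose p k := (nth (0 : C, 0 : C) l k).1.
pose w k := (nth (0 : C, 0 : C) l k).2.
have hk : forall k, (k < m)%N -> [&& p k < 0, w k \is Num.real & w k != 0].
  by move=> k km; apply: (allP hl); rewrite mem_nth.
have pr : forall k, (k < m)%N -> p k \is Num.real.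
  by move=> k km; have /and3P[h _ _] := hk k km; exact: ltr0_real.
set F := Fl l.
have cF : cj F = F.
  apply: Fl_real; apply/allP => x xl; have /and3P[h1 h2 _] := allP hl x xl.
  by rewrite ltr0_real.
have FG : F = Gs (fun i : 'I_m => p i) (fun i : 'I_m => w i) by apply: Fl_nth.
have Fev : forall k (hk : (k < m)%N), F.[p k] =
    w k * \prod_(j : 'I_m | j != Ordinal hk) (p k - p j).
  move=> k hk'; rewrite FG (@Gs_eval C _ (fun i : 'I_m => p i) (fun i : 'I_m => w i) (Ordinal hk')) //.
  move=> j; rewrite -val_eqE /= => njk.
  case: (ltngtP j k) njk => // [jk|kj] _.
    by rewrite lt_eqF // hp // jk /=.
  by rewrite gt_eqF // hp // kj /=.
have adj : forall k, (k.+1 < m)%N -> 0 < w k * w k.+1 ->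
    F.[p k] * F.[p k.+1] < 0.
  move=> k k1m wpos.
  have k0m : (k < m)%N by apply: ltnW.
  rewrite (Fev k k0m) (Fev k.+1 k1m).
  set i0 := Ordinal k0m; set i1 := Ordinal k1m.
  have i10 : i1 != i0 by rewrite -val_eqE /= (gtn_eqF (ltnSn k)).
  have i01 : i0 != i1 by rewrite eq_sym.
  rewrite (bigD1 i1) //= [\prod_(j < m | j != i1) _](bigD1 i0) //=.
  rewrite [\prod_(j < m | (j != i1) && (j != i0)) _](eq_bigl (fun j => (j != i0) && (j != i1))); last by move=> j; rewrite andbC.
  have -> : w k * ((p k - p k.+1) * \prod_(j | (j != i0) && (j != i1)) (p k - p j)) *
      (w k.+1 * ((p k.+1 - p k) * \prod_(j | (j != i0) && (j != i1)) (p k.+1 - p j)))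
      = (w k * w k.+1) * ((p k - p k.+1) * (p k.+1 - p k)) *
        \prod_(j | (j != i0) && (j != i1)) ((p k - p j) * (p k.+1 - p j)).
    by rewrite big_split /=; ring.
  have neg : (p k - p k.+1) * (p k.+1 - p k) < 0.
    by rewrite nmulr_rlt0 ?subr_lt0 ?subr_gt0 hp ?leqnn //= k1m.
  rewrite pmulr_llt0; first by rewrite pmulr_rlt0. apply: prodr_gt0.
  move=> j /andP[]; rewrite -!val_eqE /= => j0 j1.
  case: (ltngtP j k) j0 => // [jk|kj] _.
    rewrite mulr_gt0 // subr_gt0 hp //= ?jk //.
    by rewrite (ltn_trans jk (ltnSn k)).
  have kj1 : (k.+1 < j)%N by rewrite ltn_neqAle eq_sym j1 kj.
  by rewrite nmulr_rgt0 ?subr_lt0 hp // ?kj1 ?kj //=; apply: ltnW.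
have roots : forall t, (t < m)%N -> exists zs : seq C,
    [/\ uniq zs, all (root F) zs, all (fun z => z < p t) zs &
        size zs = count (fun k => 0 < w k * w k.+1) (iota 0 t)].
  elim=> [|t IH] tm; first by exists [::].
  have [zs [u r lt sz]] := IH (ltnW tm).
  have tm' : (t < m)%N by apply: ltnW.
  have ptt : p t < p t.+1 by rewrite hp ?ltnSn.
  have e : iota 0 t.+1 = iota 0 t ++ [:: t] by rewrite -addn1 iotaD.
  rewrite e count_cat /= addn0.
  case: (boolP (0 < w t * w t.+1)) => c.
    have [z [z1 z2 rz]] := ivt_conj cF (pr _ tm') (pr _ tm) ptt (adj _ tm c).
    exists (z :: zs); split => //=.
    - rewrite u andbT; apply/negP => /(allP lt) zt.
      by move: (lt_trans zt z1); rewrite ltxx.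
    - by rewrite rz.
    - rewrite /= z2 /=; apply/allP => y /(allP lt) yt; exact: lt_trans yt ptt.
    - by rewrite sz addn1.
  exists zs; split => //; last by rewrite sz addn0.
  by apply/allP => y /(allP lt) yt; exact: lt_trans yt ptt.
have mpos : (0 < m)%N.
  rewrite lt0n; apply: contraNneq F0 => /size0nil.
  by rewrite /F => ->.
have mm : (m.-1 < m)%N by rewrite ltn_predL.
have [zs [u r lt sz]] := roots m.-1 mm.
have ur : uniq_roots zs by rewrite uniq_rootsE.
have [q Fq] := uniq_roots_prod_XsubC r ur.
exists (\prod_(z <- zs) ('X - z%:P)), q; split.
- by rewrite Fq mulrC.
- move=> z; rewrite root_prod_XsubC => /(allP lt) zl; apply: lt_trans zl _.
  by have /and3P[] := hk _ mm.
have q0 : q != 0 by apply: contraNneq F0 => q0; rewrite /F -/F Fq q0 mul0r.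
have sF : (size F <= m)%N := size_Fl l.
have e1 : size F = (size q + size zs)%N.
  by rewrite Fq size_Mmonic ?monic_prod_XsubC // size_prod_XsubC addnS.
set N := count (fun k => w k < 0) (iota 0 m).
have eN : count (fun x : C * C => (x.2 < 0)%R) l = N.
  by rewrite -{1}(mkseq_nth (0:C,0:C) l) /mkseq count_map.
set cond := (fun k : nat => 0 < w k * w k.+1).
have c1 : m.-1 = (count cond (iota 0 m.-1) + count (predC cond) (iota 0 m.-1))%N.
  by rewrite count_predC size_iota.
have c2 : (count (predC cond) (iota 0 m.-1) <=
    count (fun k => (w k < 0)%R) (iota 0 m.-1) + count (fun k => (w k.+1 < 0)%R) (iota 0 m.-1))%N.
  apply: leq_trans (count_in_le (b := predU (fun k => w k < 0) (fun k => w k.+1 < 0)) _) _; last first.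
    by rewrite -count_predUI leq_addr.
  move=> k; rewrite mem_iota add0n /= => km cnd.
  have k1 : (k.+1 < m)%N by rewrite -(prednK mpos) ltnS.
  have k0 : (k < m)%N by apply: ltnW.
  have /and3P[_ r0 n0] := hk _ k0.
  have /and3P[_ r1 n1] := hk _ k1.
  have [//|w0] := boolP (w k < 0).
  have [//|w1] := boolP (w k.+1 < 0).
  have p0 : 0 < w k by rewrite lt_neqAle eq_sym n0 real_leNgt ?real0.
  have p1 : 0 < w k.+1 by rewrite lt_neqAle eq_sym n1 real_leNgt ?real0.
  by move: cnd; rewrite /cond mulr_gt0.
have em : iota 0 m = iota 0 m.-1 ++ [:: m.-1].
  by rewrite -{1}(prednK mpos) -addn1 iotaD.
have c3 : (count (fun k => (w k < 0)%R) (iota 0 m.-1) <= N)%N.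
  by rewrite /N em count_cat leq_addr.
have c4 : (count (fun k => (w k.+1 < 0)%R) (iota 0 m.-1) <= N)%N.
  have em2 : iota 0 m = 0 :: iota 1 m.-1 by rewrite -[in LHS](prednK mpos).
  have e3 : iota 1 m.-1 = map (addn 1) (iota 0 m.-1) by rewrite -iotaDl.
  rewrite /N em2 /= e3 count_map.
  rewrite (eq_count (a2 := fun k => w k.+1 < 0)); last by move=> k /=; rewrite add1n.
  by rewrite leq_addl.
have key : forall (sq szs M c c' a b N : nat), (sq + szs <= M)%N -> szs = c ->
    M.-1 = (c + c')%N -> (c' <= a + b)%N -> (a <= N)%N -> (b <= N)%N -> (0 < M)%N ->
    (sq <= 2 * N + 1)%N by move=> *; lia.
rewrite eN; apply: (key _ _ _ _ _ _ _ _ _ sz c1 c2 c3 c4 mpos).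
by rewrite -e1.
Qed.
End Base.

Section Main.
Variable C : numClosedFieldType.
Implicit Types l : seq (C * C).


Lemma dup_find l : ~~ uniq (map fst l) ->
  exists x y, [/\ x \in l, y \in rem x l & y.1 = x.1].
Proof.
elim: l => //= x l IH; rewrite negb_and negbK => /orP[/mapP[y yl yx]|nu].
  by exists x, y; rewrite mem_head eqxx.
have [x' [y [x'l yl e]]] := IH nu.
exists x', y; split => //; first by rewrite inE x'l orbT.
by case: eqP => [_|_] /=; [exact: (mem_rem yl) | rewrite inE yl orbT].
Qed.

Lemma count_neg_rem x l : x \in l ->
  count (fun x : C * C => (x.2 < 0)%R) l =
  ((x.2 < 0)%R + count (fun x : C * C => (x.2 < 0)%R) (rem x l))%N.
Proof. by move=> xl; rewrite ((permP (perm_to_rem xl)) _). Qed.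

Lemma main_list l :
  all (fun x => (x.1 < 0) && (x.2 \is Num.real)) l -> Fl l != 0 ->
  exists T R, [/\ Fl l = T * R, (forall z, root T z -> z < 0) &
    (size R <= 2 * count (fun x : C * C => (x.2 < 0)%R) l + 1)%N].
Proof.
have [k] := ubnP (size l); elim: k l => // k IH l lt hl F0.
have step : forall (x : C * C) (l' : seq (C * C)), x.1 < 0 -> Fl l = ('X - x.1%:P) * Fl l' ->
    (size l' < k)%N -> all (fun x => (x.1 < 0) && (x.2 \is Num.real)) l' ->
    (count (fun x : C * C => (x.2 < 0)%R) l' <= count (fun x : C * C => (x.2 < 0)%R) l)%N ->
    exists T R, [/\ Fl l = T * R, (forall z, root T z -> z < 0) &
    (size R <= 2 * count (fun x : C * C => (x.2 < 0)%R) l + 1)%N].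
  move=> x l' x1 e sl' hl' cl'.
  have F'0 : Fl l' != 0 by apply: contraNneq F0; rewrite e => ->; rewrite mulr0.
  have [T [R [E rT sR]]] := IH _ sl' hl' F'0.
  exists (('X - x.1%:P) * T), R; split.
  - by rewrite e E mulrA.
  - by move=> z; rewrite rootM root_XsubC => /orP[/eqP ->|/rT].
  - by apply: leq_trans sR _; rewrite leq_add2r leq_mul2l cl' orbT.
have [/hasP [x xl /eqP x20]|nz] := boolP (has (fun x : C * C => x.2 == 0) l).
  have /andP[x1 _] := allP hl x xl.
  apply: (step x (rem x l) x1).
  - by rewrite (Fl_rem xl) x20 scale0r add0r.
  - have sp : (0 < size l)%N by case: (l) xl.
    by rewrite size_rem // -ltnS (prednK sp).
  - by apply/allP => y /mem_rem /(allP hl).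
  - by rewrite (count_neg_rem xl) leq_addl.
have [nu|/negPn u] := boolP (~~ uniq (map fst l)).
  have [x [y [xl yl yx]]] := dup_find nu.
  have /andP[x1 xr] := allP hl x xl.
  have /andP[_ yr] := allP hl y (mem_rem yl).
  apply: (step x ((x.1, x.2 + y.2) :: rem y (rem x l)) x1).
  - rewrite (Fl_rem xl) (Fl_rem yl) (Dl_rem yl) /= yx. rewrite -!mul_polyC polyCD; ring.
  - have s1 : (0 < size (rem x l))%N by case: (rem x l) yl.
    have sp : (0 < size l)%N by case: (l) xl.
    by rewrite /= (size_rem yl) (prednK s1) (size_rem xl) -ltnS (prednK sp).
  - rewrite /= x1 rpredD //=; apply/allP => z /mem_rem /mem_rem /(allP hl) //.
  - rewrite (count_neg_rem xl) (count_neg_rem yl) /= addnA leq_add2r.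
    have [s0|] := boolP (x.2 + y.2 < 0); last by [].
    have [x0|x0] := boolP (x.2 < 0); first by [].
    have [y0|y0] := boolP (y.2 < 0); first by rewrite addn1.
    rewrite -real_leNgt ?real0 // in x0; rewrite -real_leNgt ?real0 // in y0.
    by move: (lt_le_trans s0 (addr_ge0 x0 y0)); rewrite ltxx.
pose leT := fun x y : C * C => x.1 <= y.1.
set ls := sort leT l.
have pl : perm_eq ls l by rewrite perm_sort.
have sls : sorted leT ls.
  apply: (sort_sorted_in (P := fun x : C * C => x.1 \is Num.real)).
    by move=> a b ra rb; rewrite /leT real_leVge.
  by apply/allP => x /(allP hl) /andP[h _]; rewrite ltr0_real.
have uls : uniq (map fst ls).
  by have := perm_map fst pl; move=> /perm_uniq ->.
have [T [R [E rT sR]]] : exists T R, [/\ Fl ls = T * R, (forall z, root T z -> z < 0) &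
    (size R <= 2 * count (fun x : C * C => (x.2 < 0)%R) ls + 1)%N].
  apply: base.
  - move=> i j /andP[ij js].
    have is' : (i < size ls)%N by apply: ltn_trans ij js.
    have le : leT (nth (0:C,0:C) ls i) (nth (0:C,0:C) ls j).
      apply: (sorted_ltn_nth (leT := leT)) => //.
      by move=> a b c; rewrite /leT; apply: le_trans.
    rewrite /leT in le; rewrite lt_neqAle le andbT.
    have := @nth_uniq _ 0 (map fst ls) i j; rewrite !size_map => /(_ is' js uls).
    rewrite !(nth_map (0:C,0:C)) //.
    by move=> ->; rewrite neq_ltn ij.
  - rewrite (perm_all _ pl); apply/allP => x xl.
    have /andP[-> ->] := allP hl x xl; rewrite andTb /=.
    by apply: contraNneq nz => <-; apply/hasP; exists x.
  - by rewrite (Fl_perm pl).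
exists T, R; split => //; first by rewrite -(Fl_perm pl).
by rewrite -((permP pl) _).
Qed.
End Main.

Section Spec.
Variable C : numClosedFieldType.
Variable n : nat.
Variables (A : 'M[C]_n) (b : 'cV[C]_n).
Hypothesis hS : SSS A b.

Let P := spectralmx A.
Let dd := spectral_diag A.
Let D := diag_mx dd.
Let Q := invmx P.
Let Pu : P \in unitmx := spectral_unit A.
Let QP : Q *m P = 1%:M := mulVmx Pu.
Let PQ : P *m Q = 1%:M := mulmxV Pu.

Lemma Asym : A \is symmetricmx.
Proof.
case: hS => AT _ _ _; apply/is_hermitianmxP.
by rewrite expr0 scale1r map_mx_id // AT.
Qed.

Lemma Areal : A \is a mxOver Num.real.
Proof. by case: hS. Qed.

Lemma eA : A = Q *m D *m P.
Proof. exact/orthomx_spectralP/symmetric_normalmx/Areal/Asym. Qed.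

Lemma dreal i : dd 0 i \is Num.real.
Proof.
have := hermitian_spectral_diag_real (realsym_hermsym Asym Areal).
by move=> /mxOverP /(_ 0 i).
Qed.

Definition uu := b^T *m Q.
Definition vv := P *m b.

Lemma uvE i : uu 0 i = (vv i 0)^*.
Proof.
case: hS => _ _ br _.
rewrite /uu /vv /Q invmx_unitary ?spectral_unitarymx // !mxE rmorph_sum /=.
apply: eq_bigr => k _; rewrite !mxE rmorphM /= mulrC.
by have /mxOverP /(_ k 0) /CrealP -> := br.
Qed.

Let mp m1 m2 (M : 'M[C]_(m1, m2)) := map_mx (@polyC C) M.
Let e i := \prod_(j | j != i) ('X - (dd 0 j)%:P).
Let E := diag_mx (\row_i e i).
Let cp := \prod_i ('X - (dd 0 i)%:P).
Let M := mp Q *m E *m mp P.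

Lemma mpQP : mp Q *m mp P = 1%:M.
Proof. by rewrite /mp -map_mxM QP map_mx1. Qed.
Lemma mpPQ : mp P *m mp Q = 1%:M.
Proof. by rewrite /mp -map_mxM PQ map_mx1. Qed.

Lemma XD : 'X%:M - mp D = diag_mx (\row_i ('X - (dd 0 i)%:P)).
Proof.
apply/matrixP => i j; rewrite !mxE.
by case: eqP => [->|_] /=; rewrite ?mulr1n ?mulr0n ?subr0.
Qed.

Lemma Kdec : char_poly_mx A = mp Q *m ('X%:M - mp D) *m mp P.
Proof.
rewrite /char_poly_mx eA mulmxBr mulmxBl scalar_mxC.
by rewrite -['X%:M *m mp Q *m mp P]mulmxA mpQP mulmx1 /mp !map_mxM.
Qed.

Lemma XDE : ('X%:M - mp D) *m E = cp%:M.
Proof.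
rewrite XD mulmx_diag -diag_const_mx; congr diag_mx.
apply/rowP => i; rewrite !mxE /cp (bigD1 i) //.
Qed.

Lemma KM : char_poly_mx A *m M = cp%:M.
Proof.
rewrite Kdec /M !mulmxA -[_ *m mp P *m mp Q]mulmxA mpPQ mulmx1.
rewrite -[mp Q *m _ *m E]mulmxA XDE scalar_mxC -mulmxA mpQP.
by rewrite mulmx1.
Qed.

Lemma cpE : char_poly A = cp.
Proof.
rewrite /char_poly Kdec !det_mulmx XD det_diag mulrC mulrA -det_mulmx mpPQ det1 mul1r.
by apply: eq_bigr => i _; rewrite mxE.
Qed.

Lemma adjE : \adj (char_poly_mx A) = M.
Proof.
have cp0 : cp != 0 by rewrite -cpE monic_neq0 ?char_poly_monic.
have h1 : \adj (char_poly_mx A) *m char_poly_mx A = cp%:M by rewrite mul_adj_mx -cpE.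
have h2 : cp *: \adj (char_poly_mx A) = cp *: M.
  by rewrite -mul_mx_scalar -KM mulmxA h1 mul_scalar_mx.
apply/matrixP => i j; have := congr1 (fun X : 'M[{poly C}]_n => X i j) h2; rewrite !mxE.
exact: mulfI.
Qed.

Lemma rdc m (r : 'rV[{poly C}]_m) d (c : 'cV_m) :
  (r *m diag_mx d *m c) 0 0 = \sum_i r 0 i * d 0 i * c i 0.
Proof. by rewrite mul_mx_diag mxE; apply: eq_bigr => i _; rewrite mxE. Qed.

Lemma numHE : numH A b = Fl [seq (dd 0 i, (vv i 0)^* * vv i 0) | i <- enum 'I_n].
Proof.
rewrite Fl_enum /numH adjE /M /Gs.
rewrite !mulmxA map_trmx -map_mxM -[_ *m mp P *m _]mulmxA -map_mxM -/uu -/vv rdc.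
apply: eq_bigr => i _; rewrite [X in X * _ * _]mxE [X in _ * X]mxE [X in _ * X * _]mxE uvE /= -mul_polyC polyCM /e; ring.
Qed.

Lemma cpDl : char_poly A = Dl [seq (dd 0 i, (vv i 0)^* * vv i 0) | i <- enum 'I_n].
Proof. by rewrite Dl_enum cpE. Qed.

Lemma dneg i : dd 0 i < 0.
Proof.
case: hS => _ _ _ heig.
have : root (char_poly A) (dd 0 i).
  by rewrite cpE /root horner_prod (bigD1 i) //= hornerXsubC subrr mul0r.
by move=> /heig; rewrite (Creal_ReP _ (dreal i)).
Qed.

Lemma powD k : D ^+ k = diag_mx (\row_i (dd 0 i) ^+ k).
Proof.
elim: k => [|k IH].
  rewrite expr0 -[1]/(1%:M : 'M_n) -diag_const_mx; congr diag_mx; by apply/rowP => i; rewrite !mxE expr0.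
by rewrite exprS -mulmxE IH /D mulmx_diag; congr diag_mx; apply/rowP => i; rewrite !mxE exprS.
Qed.

Lemma powA k : A ^+ k = Q *m D ^+ k *m P.
Proof.
elim: k => [|k IH]; first by rewrite !expr0 mulmx1 QP.
rewrite !exprS -!mulmxE IH {1}eA.
by rewrite -!mulmxA (mulmxA P) PQ mul1mx !mulmxA.
Qed.

Let U := \matrix_(k < n) (uu *m D ^+ k).

Lemma Kry : \matrix_(i < n) (b^T *m A ^+ i) = U *m P.
Proof.
apply/row_matrixP => k; rewrite row_mul !rowK powA /uu.
by rewrite !mulmxA.
Qed.

Lemma UE k i : U k i = uu 0 i * (dd 0 i) ^+ k.
Proof. by rewrite /U mxE powD mul_mx_diag !mxE. Qed.

Lemma minimal_props : minimal_SSS A b ->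
  injective (fun i => dd 0 i) /\ forall i, vv i 0 != 0.
Proof.
rewrite /minimal_SSS Kry /row_free mxrankMfree ?row_free_unit // -/(row_free U).
rewrite row_free_unit => Uu.
have ker : forall x : 'cV_n, U *m x = 0 -> x = 0.
  by move=> x Ux; rewrite -(mulKmx Uu x) Ux mulmx0.
have vnz : forall i, vv i 0 != 0.
  move=> i; apply/negP => /eqP v0.
  have := ker (delta_mx i 0).
  have -> : U *m delta_mx i 0 = 0 :> 'cV[C]_n.
    rewrite -colE; apply/matrixP => k j; rewrite mxE UE uvE v0 rmorph0 mul0r mxE.
    by [].
  move=> /(_ erefl) /(congr1 (fun X : 'cV[C]_n => X i 0)); rewrite !mxE !eqxx /=.
  by move=> /eqP; rewrite oner_eq0.
split => // i j dij; apply/eqP; apply: contraT => nij.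
have := ker ((uu 0 j) *: delta_mx i 0 - (uu 0 i) *: delta_mx j 0).
have -> : U *m ((uu 0 j) *: delta_mx i 0 - (uu 0 i) *: delta_mx j 0) = 0 :> 'cV[C]_n.
  rewrite mulmxBr -!scalemxAr -!colE.
  apply/matrixP => k l; rewrite [U]lock [uu]lock !mxE; unlock; rewrite !UE dij; ring.
move=> /(_ erefl) /(congr1 (fun X : 'cV[C]_n => X i 0)); rewrite [uu]lock !mxE !eqxx (negPf nij) /=; unlock.
rewrite mulr1 mulr0 subr0 uvE => /eqP.
by rewrite conjC_eq0 (negPf (vnz j)).
Qed.

End Spec.

Unset Implicit Arguments.

Lemma arith_aux (a r c : nat) : (c <= r)%N -> ((a + (2*r).+1).-1 <= 2*c+1)%N -> (a <= 1)%N.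
Proof. lia. Qed.

Theorem lemma2 (C : numClosedFieldType) (n r : nat)
    (A : 'M[C]_n) (b : 'cV[C]_n) (lam bb : 'I_r -> C) (s : 'I_(2 * r) -> C) :
  SSS A b -> minimal_SSS A b ->
  ZIP lam bb -> (r < n)%N ->
  (forall k, 0 < s k) ->
  (\prod_(k < 2 * r) ('X - (s k)%:P)) %| err_num A b lam bb ->
  exists Q : {poly C},
    err_num A b lam bb = (\prod_(k < 2 * r) ('X - (s k)%:P)) * Q /\
    (forall z : C, root Q z -> z < 0).
Proof.
move=> hS hmin [lam_inj lam_neg bb_pos] rn spos hdvd.
set dd := spectral_diag A.
set v := vv A b.
set l1 := [seq (dd 0 i, (v i 0)^* * v i 0) | i <- enum 'I_n].
set l2 := [seq (lam i, - bb i) | i <- enum 'I_r].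
have eE : err_num A b lam bb = Fl (l1 ++ l2).
  rewrite Fl_cat /err_num (numHE hS) (cpDl hS) -/dd -/v -/l1.
  have -> : denHr lam = Dl l2 by rewrite /l2 Dl_enum.
  have -> : numHr lam bb = - Fl l2.
    rewrite /l2 Fl_enum /Gs /numHr -sumrN; apply: eq_bigr => i _.
    by rewrite /= scaleNr opprK.
  by rewrite mulNr opprK [Fl l2 * _]mulrC.
have hall : all (fun x : C * C => (x.1 < 0) && (x.2 \is Num.real)) (l1 ++ l2).
  rewrite all_cat; apply/andP; split; apply/allP => x /mapP [i _ ->] /=.
    by rewrite (dneg hS) /= ger0_real // mulrC mul_conjC_ge0.
  by rewrite lam_neg /= rpredN gtr0_real.
have [dinj vnz] := minimal_props hS hmin.
have E0 : Fl (l1 ++ l2) != 0.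
  have [i hi] : exists i, dd 0 i \notin [seq lam j | j <- enum 'I_r].
    case: (boolP [exists i, dd 0 i \notin [seq lam j | j <- enum 'I_r]]).
      by move=> /existsP [i hi]; exists i.
    rewrite negb_exists => /forallP h; exfalso.
    have : (size [seq dd 0%R i | i : 'I_n <- enum 'I_n] <= size [seq lam j | j <- enum 'I_r])%N.
      apply: uniq_leq_size; first by rewrite (map_inj_uniq dinj) enum_uniq.
      by move=> x /mapP [i _ ->]; move: (h i); rewrite negbK.
    by rewrite !size_map -!enumT !size_enum_ord leqNgt rn.
  apply/negP => /eqP F0.
  have := congr1 (fun p : {poly C} => p.[dd 0 i]) F0.
  rewrite /= Fl_cat hornerD !hornerM horner0.
  have -> : (Dl l1).[dd 0 i] = 0.
    by rewrite /l1 Dl_enum horner_prod (bigD1 i) //= hornerXsubC subrr mul0r.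
  rewrite mul0r addr0 /l1 Fl_enum.
  rewrite (@Gs_eval C _ (fun i => dd 0 i) (fun i => (v i 0)^* * v i 0) i) /=; last first.
    by move=> j; apply: contra => /eqP /dinj ->.
  apply/eqP; rewrite !mulf_neq0 //.
  - by rewrite conjC_eq0 vnz.
  - apply/prodf_neq0 => j ji; rewrite subr_eq0.
    by apply: contra ji => /eqP /dinj ->.
  - rewrite /l2 Dl_enum horner_prod; apply/prodf_neq0 => j _.
    rewrite hornerXsubC subr_eq0; apply: contra hi => /eqP ->.
    by apply/mapP; exists j; rewrite ?mem_enum.
have [T [R [eTR rT sR]]] := main_list hall E0.
set S := \prod_(k < 2 * r) ('X - (s k)%:P).
have cST : coprimep S T.
  rewrite /S; apply: (big_ind (fun p => coprimep p T)).
  - exact: coprime1p.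
  - by move=> p q hp hq; rewrite coprimepMl hp hq.
  - move=> k _; rewrite coprimep_sym coprimep_XsubC; apply/negP => /rT h.
    by move: (lt_trans h (spos k)); rewrite ltxx.
have SR : S %| R by rewrite -(Gauss_dvdpr _ cST) -eTR -eE.
have [q Rq] := dvdpP _ _ SR.
have R0 : R != 0 by apply: contraNneq E0 => R0; rewrite eTR R0 mulr0.
have q0 : q != 0 by apply: contraNneq R0 => q0; rewrite Rq q0 mul0r.
have cnt : (count (fun x : C * C => (x.2 < 0)%R) (l1 ++ l2) <= r)%N.
  rewrite count_cat (eq_in_count (a2 := pred0)) ?count_pred0 ?add0n.
    by apply: leq_trans (count_size _ _) _; rewrite size_map size_enum_ord.
  move=> x /mapP [i _ ->] /=; apply: le_gtF.
  by rewrite mulrC mul_conjC_ge0.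
have sS : size S = (2 * r).+1.
  by rewrite /S size_prod_XsubC -[X in _ = X.+1](card_ord (2 * r)) cardT enumT.
have sq : (size q <= 1)%N.
  have := sR; rewrite Rq size_Mmonic ?monic_prod_XsubC // sS.
  exact: arith_aux cnt.
exists (T * (q`_0)%:P); split.
  rewrite eE eTR Rq {1}(size1_polyC sq) -/S; ring.
move=> z; rewrite rootM rootC => /orP [/rT //|q00].
by move: q0; rewrite (size1_polyC sq) polyC_eq0 q00.
Qed.
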